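(* Let $H$ be a group, $K\lneq H$, $\phi\in\operatorname{Aut}(H)$, $G=\langle H,t;\ tkt^{-1}=\phi(k),\ k\in K\rangle$. Let $g\in G$ and $x,y\in H$ satisfy $g^{-1}ytg=x^{-1}\phi(x)t$ and $g^{-1}hg=x^{-1}hx$ for all $h\in H$. Then $g\in K$. *)

(* Defs.v *)
Record Group := {
  carrier :> Type;
  gmul : carrier -> carrier -> carrier;
  gone : carrier;
  ginv : carrier -> carrier;
  gmul_assoc : forall a b c, gmul a (gmul b c) = gmul (gmul a b) c;
  gmul_one_l : forall a, gmul gone a = a;
  gmul_one_r : forall a, gmul a gone = a;
  gmul_inv_l : forall a, gmul (ginv a) a = gone;
  gmul_inv_r : forall a, gmul a (ginv a) = gone
}.

Arguments gmul {g}.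
Arguments gone {g}.
Arguments ginv {g}.

Definition is_hom (A B : Group) (f : A -> B) : Prop :=
  forall a b, f (gmul a b) = gmul (f a) (f b).

Definition is_aut (A : Group) (f : A -> A) : Prop :=
  is_hom A A f /\ (forall a b, f a = f b -> a = b) /\ (forall b, exists a, f a = b).

Definition is_subgroup (A : Group) (K : A -> Prop) : Prop :=
  K gone /\ (forall a b, K a -> K b -> K (gmul a b)) /\ (forall a, K a -> K (ginv a)).

Definition is_proper_subgroup (A : Group) (K : A -> Prop) : Prop :=
  is_subgroup A K /\ exists a, ~ K a.

(* (G, iota, t) is the HNN extension  < H, t ; t k t^-1 = phi(k), k in K >,
   characterised by the universal property of this presentation:
   iota : H -> G is a homomorphism, t satisfies the relations, and for every
   group L, homomorphism f : H -> L and s in L satisfying the relations there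
   is a unique homomorphism F : G -> L with F o iota = f and F t = s. *)
Definition is_HNN (H : Group) (K : H -> Prop) (phi : H -> H)
    (G : Group) (iota : H -> G) (t : G) : Prop :=
  is_hom H G iota /\
  (forall k, K k -> gmul (gmul t (iota k)) (ginv t) = iota (phi k)) /\
  (forall (L : Group) (f : H -> L) (s : L),
     is_hom H L f ->
     (forall k, K k -> gmul (gmul s (f k)) (ginv s) = f (phi k)) ->
     exists F : G -> L,
       (is_hom G L F /\ (forall h, F (iota h) = f h) /\ F t = s) /\
       (forall F' : G -> L, is_hom G L F' -> (forall h, F' (iota h) = f h) ->
          F' t = s -> forall g, F' g = F g)).

(* Main.v *)
Require Import Defs.
From Stdlib Require Import List Classical ClassicalEpsilon FunctionalExtensionality ProofIrrelevance PropExtensionality Bool.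
Import ListNotations.

Lemma g_cl1 (A : Group) (a b : A) : gmul (ginv a) (gmul a b) = b.
Proof. rewrite gmul_assoc, gmul_inv_l, gmul_one_l. reflexivity. Qed.
Lemma g_cl2 (A : Group) (a b : A) : gmul a (gmul (ginv a) b) = b.
Proof. rewrite gmul_assoc, gmul_inv_r, gmul_one_l. reflexivity. Qed.

Ltac gnorm := repeat progress (rewrite <- ?gmul_assoc, ?g_cl1, ?g_cl2, ?gmul_inv_l, ?gmul_inv_r, ?gmul_one_l, ?gmul_one_r).

Lemma g_cancel_l (A : Group) (a b c : A) : gmul a b = gmul a c -> b = c.
Proof. intro E. rewrite <- (g_cl1 A a b), <- (g_cl1 A a c), E. reflexivity. Qed.
Lemma g_inv_unique (A : Group) (a b : A) : gmul a b = gone -> b = ginv a.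
Proof. intro E. apply (g_cancel_l A a). rewrite E, gmul_inv_r. reflexivity. Qed.
Lemma g_inv_inv (A : Group) (a : A) : ginv (ginv a) = a.
Proof. symmetry. apply g_inv_unique. apply gmul_inv_l. Qed.
Lemma g_inv_mul (A : Group) (a b : A) : ginv (gmul a b) = gmul (ginv b) (ginv a).
Proof. symmetry. apply g_inv_unique. gnorm. reflexivity. Qed.
Lemma g_inv_one (A : Group) : ginv (@gone A) = gone.
Proof. symmetry. apply g_inv_unique. apply gmul_one_l. Qed.
Lemma hom_one (A B : Group) f : is_hom A B f -> f gone = gone.
Proof. intro hf. apply (g_cancel_l B (f gone)). rewrite <- hf, !gmul_one_r. reflexivity. Qed.
Lemma hom_inv (A B : Group) f : is_hom A B f -> forall a, f (ginv a) = ginv (f a).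
Proof. intros hf a. apply g_inv_unique. rewrite <- hf, gmul_inv_r. apply hom_one; auto. Qed.

Record perm (X : Type) := mkperm { pf : X -> X; pinv : X -> X;
  pK : forall x, pinv (pf x) = x; pK' : forall x, pf (pinv x) = x }.
Arguments mkperm {X}. Arguments pf {X}. Arguments pinv {X}. Arguments pK {X}. Arguments pK' {X}.

Lemma perm_eq X (p q : perm X) : (forall x, pf p x = pf q x) -> p = q.
Proof.
  destruct p as [f fi fK fK'], q as [g gi gK gK']; simpl; intro E.
  assert (f = g) by (apply functional_extensionality; auto). subst g.
  assert (fi = gi).
  { apply functional_extensionality; intro x.
    transitivity (gi (f (fi x))). - now rewrite gK. - now rewrite fK'. }
  subst gi. f_equal; apply proof_irrelevance.
Qed.

Definition pcomp X (p q : perm X) : perm X.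
  refine (mkperm (fun x => pf p (pf q x)) (fun x => pinv q (pinv p x)) _ _).
  - intro x. now rewrite pK, pK.
  - intro x. now rewrite pK', pK'.
Defined.
Definition pid X : perm X := mkperm (fun x => x) (fun x => x) (fun x => eq_refl) (fun x => eq_refl).
Definition pinvp X (p : perm X) : perm X := mkperm (pinv p) (pf p) (pK' p) (pK p).

Definition Sym (X : Type) : Group.
  refine {| carrier := perm X; gmul := @pcomp X; gone := pid X; ginv := @pinvp X |}.
  - intros; now apply perm_eq.
  - intros; now apply perm_eq.
  - intros; now apply perm_eq.
  - intros; apply perm_eq; intro; simpl; apply pK.
  - intros; apply perm_eq; intro; simpl; apply pK'.
Defined.

Definition Lmul (G : Group) (g : G) : perm (G + G).
  refine (mkperm (fun x => match x with inl a => inl (gmul g a) | inr a => inr (gmul g a) end)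
                 (fun x => match x with inl a => inl (gmul (ginv g) a) | inr a => inr (gmul (ginv g) a) end) _ _).
  - intros [a|a]; now rewrite g_cl1.
  - intros [a|a]; now rewrite g_cl2.
Defined.

Lemma Lmul_hom (G : Group) : is_hom G (Sym (G + G)) (Lmul G).
Proof. intros a b. apply perm_eq. intros [x|x]; simpl; now rewrite gmul_assoc. Qed.

Definition swp (G : Group) (P : G -> Prop) (x : G + G) : G + G :=
  match x with
  | inl a => if excluded_middle_informative (P a) then inr a else inl a
  | inr a => if excluded_middle_informative (P a) then inl a else inr a
  end.

Lemma swp_inv G P x : swp G P (swp G P x) = x.
Proof.
  destruct x as [a|a]; simpl; destruct (excluded_middle_informative (P a)); simpl;
  destruct (excluded_middle_informative (P a)); tauto.
Qed.

Definition conjp (G : Group) (P : G -> Prop) (p : perm (G + G)) : perm (G + G).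
  refine (mkperm (fun x => swp G P (pf p (swp G P x))) (fun x => swp G P (pinv p (swp G P x))) _ _).
  - intro x. now rewrite swp_inv, pK, swp_inv.
  - intro x. now rewrite swp_inv, pK', swp_inv.
Defined.

Lemma generation H K phi G iota t (hG : is_HNN H K phi G iota t) (P : G -> Prop) :
  (forall a b, P a -> P b -> P (gmul a b)) -> (forall a, P a -> P (ginv a)) ->
  (forall h, P (iota h)) -> P t -> forall g, P g.
Proof.
  intros Pm Pi Ph Pt g.
  destruct hG as [hi [hrel hu]].
  assert (key : forall u, P u -> conjp G P (Lmul G u) = Lmul G u).
  { intros u Pu. apply perm_eq. intros [a|a]; simpl;
    destruct (excluded_middle_informative (P a)) as [pa|pa]; simpl;
    destruct (excluded_middle_informative (P (gmul u a))) as [pb|pb]; try reflexivity;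
    exfalso; try (apply pb; now apply Pm).
    all: apply pa; rewrite <- (g_cl1 G u a); apply Pm; auto. }
  assert (hL : is_hom H (Sym (G + G)) (fun h => Lmul G (iota h))).
  { intros a b. rewrite hi. apply Lmul_hom. }
  destruct (hu (Sym (G+G)) (fun h => Lmul G (iota h)) (Lmul G t) hL) as [F [[hF1 [hF2 hF3]] hFu]].
  { intros k Kk. rewrite <- (hrel k Kk).
    rewrite !Lmul_hom. f_equal. apply perm_eq. intros [x|x]; reflexivity. }
  assert (E1 := hFu (Lmul G) (Lmul_hom G) (fun h => eq_refl) eq_refl g).
  assert (E2 := hFu (fun g => conjp G P (Lmul G g))).
  rewrite <- E2 in E1.
  - assert (E3 := f_equal (fun p => pf p (inl gone)) E1). simpl in E3.
    destruct (excluded_middle_informative (P gone)) as [p1|p1].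
    + simpl in E3. rewrite gmul_one_r in E3.
      destruct (excluded_middle_informative (P g)); auto. discriminate.
    + exfalso. apply p1. rewrite <- (gmul_inv_r G t). apply Pm; auto.
  - intros a b. apply perm_eq. intro x. simpl. rewrite swp_inv.
    destruct (swp G P x); now rewrite gmul_assoc.
  - intro h. simpl. apply key. apply Ph.
  - apply key; auto.
Qed.

Definition phiinv (H : Group) (phi : H -> H) (b : H) : H :=
  epsilon (inhabits gone) (fun a => phi a = b).
Definition AA (H : Group) (K : H -> Prop) (phi : H -> H) (e : bool) (a : H) : Prop :=
  if e then exists k, K k /\ a = phi k else K a.
Definition rep (H : Group) (K : H -> Prop) (phi : H -> H) (e : bool) (g : H) : H :=
  epsilon (inhabits gone) (fun r => AA H K phi e (gmul (ginv r) g) /\ (AA H K phi e r -> r = gone)).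
Definition psi (H : Group) (phi : H -> H) (e : bool) (a : H) : H :=
  if e then phiinv H phi a else phi a.

Lemma phiinv_r H phi (hphi : is_aut H phi) b : phi (phiinv H phi b) = b.
Proof.
  unfold phiinv. apply epsilon_spec. destruct hphi as [_ [_ s]]. apply s.
Qed.
Lemma phiinv_l H phi (hphi : is_aut H phi) a : phiinv H phi (phi a) = a.
Proof. apply (proj1 (proj2 hphi)). now rewrite phiinv_r. Qed.

Lemma AA_sub H K phi (hK : is_subgroup H K) (hphi : is_aut H phi) e :
  is_subgroup H (AA H K phi e).
Proof.
  destruct hK as [k1 [km ki]]. destruct hphi as [hh _].
  destruct e; simpl; split; [|split| |split]; auto.
  - exists gone. split; auto. symmetry; now apply hom_one.
  - intros a b [k [Kk ->]] [k' [Kk' ->]]. exists (gmul k k'). split; auto.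
  - intros a [k [Kk ->]]. exists (ginv k). split; auto. symmetry; now apply hom_inv.
Qed.

Lemma rep_spec H K phi (hK : is_subgroup H K) (hphi : is_aut H phi) e g :
  AA H K phi e (gmul (ginv (rep H K phi e g)) g) /\ (AA H K phi e (rep H K phi e g) -> rep H K phi e g = gone).
Proof.
  unfold rep. apply epsilon_spec.
  destruct (AA_sub H K phi hK hphi e) as [a1 [am ai]].
  destruct (classic (AA H K phi e g)) as [Ag|Ag].
  - exists gone. rewrite g_inv_one, gmul_one_l. auto.
  - exists g. rewrite gmul_inv_l. split; auto. intro; contradiction.
Qed.

Lemma rep_one H K phi (hK : is_subgroup H K) (hphi : is_aut H phi) e a :
  AA H K phi e a -> rep H K phi e a = gone.
Proof.
  intro Aa. destruct (rep_spec H K phi hK hphi e a) as [s1 s2]. apply s2.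
  destruct (AA_sub H K phi hK hphi e) as [a1 [am ai]].
  assert (E : rep H K phi e a = gmul a (ginv (gmul (ginv (rep H K phi e a)) a))).
  { rewrite g_inv_mul, g_inv_inv. gnorm. reflexivity. }
  rewrite E. auto.
Qed.

Lemma rep_A H K phi (hK : is_subgroup H K) (hphi : is_aut H phi) e a :
  rep H K phi e a = gone -> AA H K phi e a.
Proof.
  intro E. destruct (rep_spec H K phi hK hphi e a) as [s1 _]. rewrite E, g_inv_one, gmul_one_l in s1. exact s1.
Qed.

Lemma rep_coset H K phi (hK : is_subgroup H K) (hphi : is_aut H phi) e g g' :
  AA H K phi e (gmul (ginv g) g') -> rep H K phi e g = rep H K phi e g'.
Proof.
  intro Ag. unfold rep. f_equal. apply functional_extensionality. intro r.
  apply propositional_extensionality.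
  destruct (AA_sub H K phi hK hphi e) as [a1 [am ai]].
  split; intros [h1 h2]; split; auto.
  - replace (gmul (ginv r) g') with (gmul (gmul (ginv r) g) (gmul (ginv g) g')) by (gnorm; reflexivity). auto.
  - replace (gmul (ginv r) g) with (gmul (gmul (ginv r) g') (ginv (gmul (ginv g) g'))) by (rewrite g_inv_mul, g_inv_inv; gnorm; reflexivity). auto.
Qed.

Lemma rep_idem H K phi (hK : is_subgroup H K) (hphi : is_aut H phi) e g :
  rep H K phi e (rep H K phi e g) = rep H K phi e g.
Proof. apply rep_coset; auto. apply rep_spec; auto. Qed.

Lemma psi_mul H K phi (hK : is_subgroup H K) (hphi : is_aut H phi) e a b :
  AA H K phi e a -> AA H K phi e b -> psi H phi e (gmul a b) = gmul (psi H phi e a) (psi H phi e b).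
Proof.
  destruct e; simpl.
  - intros [k [_ ->]] [k' [_ ->]]. rewrite <- (proj1 hphi), !phiinv_l; auto.
  - intros; apply (proj1 hphi).
Qed.

Lemma psi_A H K phi (hK : is_subgroup H K) (hphi : is_aut H phi) e a :
  AA H K phi e a -> AA H K phi (negb e) (psi H phi e a).
Proof.
  destruct e; simpl.
  - intros [k [Kk ->]]. rewrite phiinv_l; auto.
  - intros Ka. exists a; auto.
Qed.

Lemma psi_one H phi (hphi : is_aut H phi) e : psi H phi e gone = gone.
Proof.
  destruct e; simpl.
  - rewrite <- (hom_one H H phi (proj1 hphi)) at 1. apply phiinv_l; auto.
  - apply hom_one, hphi.
Qed.

Fixpoint act (H : Group) (K : H -> Prop) (phi : H -> H) (h : H) (w : list (carrier H * bool)) : list (carrier H * bool) :=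
  match w with
  | [] => []
  | (r, e) :: rest =>
      let r' := rep H K phi e (gmul h r) in
      (r', e) :: act H K phi (psi H phi e (gmul (ginv r') (gmul h r))) rest
  end.

Definition nopinch (H : Group) (e : bool) (w : list (carrier H * bool)) : Prop :=
  match w with [] => True | (r1, e2) :: _ => ~ (e2 = negb e /\ r1 = gone) end.

Fixpoint red (H : Group) (K : H -> Prop) (phi : H -> H) (w : list (carrier H * bool)) : Prop :=
  match w with
  | [] => True
  | (r, e) :: rest => rep H K phi e r = r /\ nopinch H e rest /\ red H K phi rest
  end.

Lemma act_comp H K phi (hK : is_subgroup H K) (hphi : is_aut H phi) w :
  forall h h', act H K phi h (act H K phi h' w) = act H K phi (gmul h h') w.
Proof.
  induction w as [|[r e] rest IH]; intros h h'; simpl; auto.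
  set (r1 := rep H K phi e (gmul h' r)).
  assert (E : rep H K phi e (gmul h r1) = rep H K phi e (gmul (gmul h h') r)).
  { apply rep_coset; auto. rewrite g_inv_mul. gnorm. apply rep_spec; auto. }
  rewrite E, IH. f_equal. f_equal.
  assert (A1 := proj1 (rep_spec H K phi hK hphi e (gmul h' r))).
  assert (A2 := proj1 (rep_spec H K phi hK hphi e (gmul h r1))).
  rewrite E in A2.
  rewrite <- (psi_mul H K phi); auto. f_equal. unfold r1. gnorm. reflexivity.
Qed.

Lemma act_one H K phi (hK : is_subgroup H K) (hphi : is_aut H phi) w :
  red H K phi w -> act H K phi gone w = w.
Proof.
  induction w as [|[r e] rest IH]; simpl; auto.
  intros [R [_ Rr]]. rewrite gmul_one_l, R, gmul_inv_l, psi_one, IH; auto.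
Qed.

Lemma act_red H K phi (hK : is_subgroup H K) (hphi : is_aut H phi) w :
  red H K phi w -> forall h, red H K phi (act H K phi h w).
Proof.
  induction w as [|[r e] rest IH]; simpl; auto.
  intros [R [N Rr]] h. split; [apply rep_idem; auto|]. split; [|apply IH; auto].
  destruct rest as [|[r1 e2] rest']; simpl; auto.
  intros [Ee Er]. apply N. split; auto.
  set (b := psi H phi e (gmul (ginv (rep H K phi e (gmul h r))) (gmul h r))) in *.
  assert (Ab : AA H K phi e2 b).
  { subst e2. apply psi_A; auto. apply rep_spec; auto. }
  apply rep_A in Er; auto.
  destruct (AA_sub H K phi hK hphi e2) as [a1 [am ai]].
  assert (Ar1 : AA H K phi e2 r1).
  { replace r1 with (gmul (ginv b) (gmul b r1)) by apply g_cl1. auto. }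
  destruct Rr as [R1 _]. rewrite <- R1. apply rep_one; auto.
Qed.

Definition tstep (H : Group) (e : bool) (w : list (carrier H * bool)) : list (carrier H * bool) :=
  match w with
  | (r, e') :: rest => if excluded_middle_informative (e' = negb e /\ r = gone) then rest else (gone, e) :: w
  | [] => [(gone, e)]
  end.

Lemma tstep_red H K phi (hK : is_subgroup H K) (hphi : is_aut H phi) e w :
  red H K phi w -> red H K phi (tstep H e w).
Proof.
  assert (R1 : rep H K phi e gone = gone) by (apply rep_one; auto; apply AA_sub; auto).
  destruct w as [|[r e'] rest]; simpl; intro Rw.
  - repeat split; auto.
  - destruct (excluded_middle_informative (e' = negb e /\ r = gone)) as [c|c]; simpl.
    + apply Rw.
    + split; auto.
Qed.

Lemma tstep_inv (H : Group) (K : H -> Prop) (phi : H -> H) e w :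
  red H K phi w -> tstep H (negb e) (tstep H e w) = w.
Proof.
  destruct w as [|[r e'] rest]; simpl; intro Rw.
  - rewrite negb_involutive.
    destruct (excluded_middle_informative (e = e /\ gone = gone)) as [c|c]; auto. tauto.
  - destruct (excluded_middle_informative (e' = negb e /\ r = gone)) as [[c1 c2]|c]; simpl.
    + subst. destruct Rw as [_ [N _]].
      destruct rest as [|[r1 e2] rest']; simpl; auto.
      destruct (excluded_middle_informative (e2 = negb (negb e) /\ r1 = gone)) as [c|c]; auto.
      exfalso; apply N. exact c.
    + rewrite negb_involutive.
      destruct (excluded_middle_informative (e = e /\ gone = gone)) as [c'|c']; auto. tauto.
Qed.

Lemma sig_ext {X} {P : X -> Prop} (a b : {x | P x}) : proj1_sig a = proj1_sig b -> a = b.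
Proof. destruct a as [a pa], b as [b pb]; simpl; intro E; subst. f_equal; apply proof_irrelevance. Qed.

Definition Om (H : Group) (K : H -> Prop) (phi : H -> H) := {w : list (carrier H * bool) | red H K phi w}.

Definition actP (H : Group) (K : H -> Prop) (phi : H -> H) (hK : is_subgroup H K) (hphi : is_aut H phi) (h : H)
  : perm (Om H K phi).
  refine (mkperm (fun w => exist _ (act H K phi h (proj1_sig w)) (act_red H K phi hK hphi _ (proj2_sig w) h))
                 (fun w => exist _ (act H K phi (ginv h) (proj1_sig w)) (act_red H K phi hK hphi _ (proj2_sig w) (ginv h))) _ _).
  - intros [w Rw]. apply sig_ext; simpl. rewrite act_comp, gmul_inv_l, act_one; auto.
  - intros [w Rw]. apply sig_ext; simpl. rewrite act_comp, gmul_inv_r, act_one; auto.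
Defined.

Definition tP (H : Group) (K : H -> Prop) (phi : H -> H) (hK : is_subgroup H K) (hphi : is_aut H phi) (e : bool)
  : perm (Om H K phi).
  refine (mkperm (fun w => exist _ (tstep H e (proj1_sig w)) (tstep_red H K phi hK hphi e _ (proj2_sig w)))
                 (fun w => exist _ (tstep H (negb e) (proj1_sig w)) (tstep_red H K phi hK hphi (negb e) _ (proj2_sig w))) _ _).
  - intros [w Rw]. apply sig_ext; simpl. apply (tstep_inv H K phi); auto.
  - intros [w Rw]. apply sig_ext; simpl. rewrite <- (negb_involutive e) at 1. apply (tstep_inv H K phi); auto.
Defined.

Lemma rel_list H K phi (hK : is_subgroup H K) (hphi : is_aut H phi) k w :
  K k -> red H K phi w -> tstep H true (act H K phi k (tstep H false w)) = act H K phi (phi k) w.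
Proof.
  intros Kk Rw.
  assert (Ak : AA H K phi false k) by exact Kk.
  assert (Apk : AA H K phi true (phi k)) by (exists k; auto).
  destruct w as [|[r e'] rest].
  - simpl. rewrite gmul_one_r, (rep_one H K phi hK hphi false k Ak).
    destruct (excluded_middle_informative _) as [c|c]; auto. exfalso; apply c; auto.
  - unfold tstep at 2.
    destruct (excluded_middle_informative (e' = negb false /\ r = gone)) as [[c1 c2]|c].
    + subst. simpl negb.
      cbn [act]. rewrite gmul_one_r, (rep_one H K phi hK hphi true (phi k) Apk), g_inv_one, gmul_one_l.
      cbn [psi]. rewrite phiinv_l; auto.
      destruct Rw as [_ [N Rr]].
      destruct rest as [|[r1 e2] rest']; simpl; auto.
      destruct (excluded_middle_informative _) as [[d1 d2]|d]; auto.
      exfalso. subst e2. apply N. split; auto.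
      apply rep_A in d2; auto. simpl in d2. pose proof hK as [_ [km ki]].
      destruct Rr as [R1 _]. rewrite <- R1. apply rep_one; auto. simpl.
      replace r1 with (gmul (ginv k) (gmul k r1)) by apply g_cl1. auto.
    + cbn [act]. rewrite gmul_one_r, (rep_one H K phi hK hphi false k Ak), g_inv_one, gmul_one_l.
      simpl. destruct (excluded_middle_informative _) as [d|d]; auto. exfalso; apply d; auto.
Qed.

Definition Tg (G : Group) (t : G) (e : bool) : G := if e then t else ginv t.

Fixpoint eval (H G : Group) (iota : H -> G) (t : G) (w : list (carrier H * bool)) : G :=
  match w with
  | [] => gone
  | (r, e) :: rest => gmul (iota r) (gmul (Tg G t e) (eval H G iota t rest))
  end.

Lemma rel_G H K phi G iota t (hphi : is_aut H phi) (hG : is_HNN H K phi G iota t) e a :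
  AA H K phi e a -> gmul (iota a) (Tg G t e) = gmul (Tg G t e) (iota (psi H phi e a)).
Proof.
  destruct hG as [hi [hrel _]].
  destruct e; simpl.
  - intros [k [Kk ->]]. rewrite phiinv_l; auto. rewrite <- (hrel k Kk). gnorm. reflexivity.
  - intros Kk. rewrite <- (hrel a Kk). gnorm. reflexivity.
Qed.

Lemma eval_act H K phi G iota t (hK : is_subgroup H K) (hphi : is_aut H phi) (hG : is_HNN H K phi G iota t) w :
  forall h, exists h', gmul (iota h) (eval H G iota t w) = gmul (eval H G iota t (act H K phi h w)) (iota h').
Proof.
  assert (hi := proj1 hG).
  induction w as [|[r e] rest IH]; intro h; simpl.
  - exists h. now rewrite gmul_one_r, gmul_one_l.
  - set (r' := rep H K phi e (gmul h r)).
    set (a := gmul (ginv r') (gmul h r)).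
    destruct (IH (psi H phi e a)) as [h'' E]. exists h''.
    assert (Aa : AA H K phi e a) by (apply rep_spec; auto).
    assert (E1 : gmul (iota h) (iota r) = gmul (iota r') (iota a)).
    { rewrite <- !hi. f_equal. unfold a. gnorm. reflexivity. }
    rewrite <- !gmul_assoc, (gmul_assoc _ (iota h)), E1, <- gmul_assoc, (gmul_assoc _ (iota a)).
    rewrite (rel_G H K phi G iota t hphi hG e a Aa), <- gmul_assoc, E. reflexivity.
Qed.

Lemma eval_t H K phi G iota t (hK : is_subgroup H K) (hG : is_HNN H K phi G iota t) w :
  exists h', gmul t (eval H G iota t w) = gmul (eval H G iota t (tstep H true w)) (iota h').
Proof.
  assert (i1 : iota gone = gone) by (apply hom_one; apply hG).
  exists gone. rewrite i1, gmul_one_r.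
  destruct w as [|[r e'] rest]; simpl.
  - rewrite i1. gnorm. reflexivity.
  - destruct (excluded_middle_informative (e' = false /\ r = gone)) as [[c1 c2]|c].
    + subst. simpl. rewrite i1. gnorm. reflexivity.
    + simpl. rewrite i1. gnorm. reflexivity.
Qed.

Lemma conj_solve (A : Group) (a y c t : A) :
  gmul (gmul (ginv a) (gmul y t)) a = gmul c t -> gmul (gmul t a) (ginv t) = gmul (ginv y) (gmul a c).
Proof.
  intro E.
  assert (E' : gmul y (gmul t a) = gmul a (gmul c t)) by (rewrite <- E; gnorm; reflexivity).
  rewrite <- (g_cl1 _ y (gmul t a)), E'. gnorm. reflexivity.
Qed.

Lemma fixed_nil H K phi (hK : is_proper_subgroup H K) (hphi : is_aut H phi) w :
  red H K phi w -> (forall h, act H K phi h w = w) -> w = [].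
Proof.
  destruct w as [|[r e] rest]; auto. intros _ Hf.
  destruct hK as [hK [k0 nk0]].
  set (a0 := if e then phi k0 else k0).
  assert (na0 : ~ AA H K phi e a0).
  { unfold a0; destruct e; simpl; auto. intros [k [Kk E]].
    apply (proj1 (proj2 hphi)) in E. subst; auto. }
  specialize (Hf (gmul r (gmul a0 (ginv r)))). simpl in Hf. injection Hf as E1 _.
  destruct (rep_spec H K phi hK hphi e (gmul (gmul r (gmul a0 (ginv r))) r)) as [s _].
  rewrite E1 in s. exfalso. apply na0. revert s. gnorm. auto.
Qed.

Theorem lemma4p3 (H : Group) (K : H -> Prop) (phi : H -> H)
    (G : Group) (iota : H -> G) (t : G)
    (hK : is_proper_subgroup H K) (hphi : is_aut H phi)
    (hG : is_HNN H K phi G iota t)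
    (g : G) (x y : H)
    (h1 : gmul (gmul (ginv g) (gmul (iota y) t)) g
          = gmul (iota (gmul (ginv x) (phi x))) t)
    (h2 : forall h : H, gmul (gmul (ginv g) (iota h)) g
                        = iota (gmul (gmul (ginv x) h) x)) :
  exists k : H, K k /\ g = iota k.
Proof.
  pose proof (proj1 hK) as hK0.
  pose proof hG as [hi [hrel hu]].
  destruct (hu (Sym (Om H K phi)) (actP H K phi hK0 hphi) (tP H K phi hK0 hphi true)) as [F [[hF1 [hF2 hF3]] _]].
  { intros a b. apply perm_eq. intros [w Rw]. apply sig_ext. simpl. rewrite act_comp; auto. }
  { intros k Kk. apply perm_eq. intros [w Rw]. apply sig_ext. simpl. apply rel_list; auto. }
  set (P := fun g : G => forall w : Om H K phi, exists h,
        gmul g (eval H G iota t (proj1_sig w)) = gmul (eval H G iota t (proj1_sig (pf (F g) w))) (iota h)).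
  assert (PA : forall g, P g).
  { apply (generation H K phi G iota t hG P).
    - intros a b Pa Pb w. destruct (Pb w) as [h2' E2]. destruct (Pa (pf (F b) w)) as [h1' E1].
      exists (gmul h1' h2'). rewrite hF1. simpl.
      rewrite <- gmul_assoc, E2, gmul_assoc, E1, hi, gmul_assoc. reflexivity.
    - intros a Pa w. destruct (Pa (pf (F (ginv a)) w)) as [h E].
      assert (FF : pf (F a) (pf (F (ginv a)) w) = w).
      { change (pf (pcomp _ (F a) (F (ginv a))) w = w). change (pf (gmul (F a) (F (ginv a))) w = w).
        rewrite <- hF1, gmul_inv_r, (hom_one G _ F hF1). reflexivity. }
      rewrite FF in E. exists (ginv h).
      rewrite (hom_inv H G iota hi). assert (E3 : eval H G iota t (proj1_sig w) = gmul (gmul a (eval H G iota t (proj1_sig (pf (F (ginv a)) w)))) (ginv (iota h))) by (rewrite E; gnorm; reflexivity). rewrite E3. gnorm. reflexivity.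
    - intros h w. rewrite hF2. simpl. apply (eval_act H K phi G iota t hK0 hphi hG).
    - intros w. rewrite hF3. simpl. apply (eval_t H K phi G iota t hK0 hG). }
  set (w0 := exist (fun w => red H K phi w) [] I : Om H K phi).
  assert (Hv : proj1_sig (pf (F g) w0) = []).
  { apply (fixed_nil H K phi hK hphi); [apply proj2_sig|].
    intro h.
    assert (E : gmul (iota h) g = gmul g (iota (gmul (gmul (ginv x) h) x))).
    { rewrite <- h2. gnorm. reflexivity. }
    change (act H K phi h (proj1_sig (pf (F g) w0))) with (proj1_sig (pf (actP H K phi hK0 hphi h) (pf (F g) w0))).
    rewrite <- hF2. change (pf (F (iota h)) (pf (F g) w0)) with (pf (gmul (F (iota h)) (F g)) w0).
    rewrite <- hF1, E, hF1. simpl. f_equal. f_equal. rewrite hF2. apply sig_ext. reflexivity. }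
  destruct (PA g w0) as [z Ez]. rewrite Hv in Ez. simpl in Ez.
  rewrite gmul_one_r, gmul_one_l in Ez. subst g.
  exists z. split; auto.
  apply NNPP. intro nz.
  apply conj_solve in h1.
  rewrite <- hi, <- (hom_inv H G iota hi), <- hi in h1.
  assert (E := f_equal (fun q => proj1_sig (pf (F q) w0)) h1). simpl in E.
  rewrite !hF1, hF2, hF2, (hom_inv G _ F hF1), hF3 in E. simpl in E.
  destruct (excluded_middle_informative _) as [[_ d]|d]; [|discriminate].
  apply nz. rewrite gmul_one_r in d. apply rep_A in d; auto.
Qed.
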